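(* Let $k\geq 2$, let $\mathbb Z_0=\mathbb Z\setminus\{0\}$ and let $\{\lambda_j\}_{j\in\mathbb Z_0}$ be positive numbers. If there are sequences of positive numbers $z=\{z_j\}_{j\in\mathbb Z_0}$, $\tilde z=\{\tilde z_j\}_{j\in\mathbb Z_0}$ satisfying $$z_i=\lambda_i\Bigl(\frac{1}{1+\sum_{j\in\mathbb Z_0}\tilde z_j}\Bigr)^{k},\qquad \tilde z_i=\lambda_i\Bigl(\frac{1}{1+\sum_{j\in\mathbb Z_0}z_j}\Bigr)^{k},\qquad i\in\mathbb Z_0,$$ then the series $\sum_{j\in\mathbb Z_0}z_j$, $\sum_{j\in\mathbb Z_0}\tilde z_j$ and $\sum_{j\in\mathbb Z_0}\lambda_j$ all converge.
   Context: If one of the sums $\sum_j z_j$, $\sum_j\tilde z_j$ is $+\infty$, the corresponding right-hand side is interpreted as $0$. *)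

(* Defs.v *)
From mathcomp Require Import all_boot all_order all_algebra.
From mathcomp Require Import all_classical all_reals all_analysis.
Set Implicit Arguments. Unset Strict Implicit. Unset Printing Implicit Defensive.
Import Order.TTheory GRing.Theory Num.Theory.
Local Open Scope classical_set_scope.
Local Open Scope ring_scope.

Definition Zne0 : set int := [set j : int | j != 0].

(* (1/(1+S))^k for S in [0,+oo]; interpreted as 0 when S = +oo
   (convention from the paper); S = -oo never occurs for nonnegative sums. *)
Definition recip_pow (R : realType) (S : \bar R) (k : nat) : R :=
  match S with
  | EFin s => (1 / (1 + s)) ^+ k
  | _ => 0
  end.

(* Main.v *)
Require Import Defs.
From mathcomp Require Import all_boot all_order all_algebra.
From mathcomp Require Import all_classical all_reals all_analysis.
Import Order.TTheory GRing.Theory Num.Theory.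
Local Open Scope classical_set_scope.
Local Open Scope ring_scope.

Lemma esum_mulrn (R : realType) (T : choiceType) (I : set T) (a : T -> \bar R) n :
  (forall i, I i -> (0 <= a i)%E) ->
  \esum_(i in I) (a i *+ n)%R = ((\esum_(i in I) a i) *+ n)%R.
Proof.
move=> a0; elim: n => [|n IH].
  rewrite /=; apply: esum1 => i _; done.
have hn : forall i, I i -> (0 <= (a i *+ n)%R)%E.
  move=> i Ii; elim: n {IH} => [|m IHm]; first by [].
  idtac.
  by rewrite mulrS adde_ge0 // a0.
rewrite mulrS -IH -esumD //; apply: eq_esum => i _; by rewrite mulrS.
Qed.

Lemma fin_or_zero (R : realType) (S : \bar R) k :
  recip_pow S k != 0 -> exists s : R, S = s%:E.
Proof.
case: S => [s _|/=|/=]; [by exists s|by rewrite eqxx|by rewrite eqxx].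
Qed.

Theorem mainTheorem4 (R : realType) (k : nat) (hk : (2 <= k)%N)
  (lam z zt : int -> R)
  (hlam : forall j, j != 0 -> 0 < lam j)
  (hz : forall j, j != 0 -> 0 < z j)
  (hzt : forall j, j != 0 -> 0 < zt j)
  (eqz : forall i, i != 0 ->
     z i = lam i * recip_pow (\esum_(j in Zne0) (zt j)%:E) k)
  (eqzt : forall i, i != 0 ->
     zt i = lam i * recip_pow (\esum_(j in Zne0) (z j)%:E) k) :
  ((\esum_(j in Zne0) (z j)%:E < +oo)%E /\
   (\esum_(j in Zne0) (zt j)%:E < +oo)%E /\
   (\esum_(j in Zne0) (lam j)%:E < +oo)%E).
Proof.
have h1 : (1 : int) != 0 by [].
set S := \esum_(j in Zne0) (z j)%:E in eqzt *.
set T := \esum_(j in Zne0) (zt j)%:E in eqz *.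
have aS : 0 < recip_pow S k.
  have := hzt 1 h1; rewrite eqzt // pmulr_rgt0 //; exact: hlam.
have aT : 0 < recip_pow T k.
  have := hz 1 h1; rewrite eqz // pmulr_rgt0 //; exact: hlam.
have [s Es] := fin_or_zero _ _ _ (lt0r_neq0 aS).
have [t Et] := fin_or_zero _ _ _ (lt0r_neq0 aT).
split; first by rewrite Es ltry.
split; first by rewrite Et ltry.
set a := recip_pow T k in eqz aT.
set n := (Num.Def.trunc (a^-1)).+1.
have En : forall r : R, ((r%:E) *+ n)%R = (r *+ n)%:E.
  by move=> r; exact: (esym (EFin_natmul r n)).
have hle : (\esum_(j in Zne0) (lam j)%:E <= ((\esum_(j in Zne0) (z j)%:E) *+ n)%R)%E.
  rewrite -esum_mulrn; last by move=> i Ii; rewrite lee_fin ltW // hz.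
  apply: le_esum => i Ii; rewrite En lee_fin.
  have Hi : i != 0 := Ii.
  rewrite eqz // -mulr_natr -mulrA ler_peMr ?(ltW (hlam _ Hi)) //.
  rewrite -[leLHS](mulfV (lt0r_neq0 aT)) ler_pM2l //.
  exact: ltW (truncnS_gt _).
apply: (le_lt_trans hle).
by rewrite -/S Es En ltry.
Qed.
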